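(* Let $S$ be a $\Gamma$-AG$^{**}$-groupoid. Then $S$ is intra-regular if and only if every right $\Gamma$-ideal of $S$ is $\Gamma$-semiprime.
   Context: Let $S$ and $\Gamma$ be nonempty sets with a map $S\times\Gamma\times S\to S$, $(x,\gamma,y)\mapsto x\gamma y$. $S$ is a $\Gamma$-AG-groupoid if $(x\gamma y)\delta z=(z\gamma y)\delta x$ for all $x,y,z\in S$, $\gamma,\delta\in\Gamma$; it is a $\Gamma$-AG$^{**}$-groupoid if moreover $a\alpha(b\beta c)=b\alpha(a\beta c)$ for all $a,b,c\in S$, $\alpha,\beta\in\Gamma$. For subsets $A,B\subseteq S$, $A\Gamma B=\{a\gamma b: a\in A,\gamma\in\Gamma,b\in B\}$. $S$ is intra-regular if for every $a\in S$ there exist $x,y\in S$ and $\beta,\gamma,\delta\in\Gamma$ with $a=(x\beta(a\delta a))\gamma y$. A nonempty subset $R$ is a right $\Gamma$-ideal if $R\Gamma S\subseteq R$. A subset $P\subseteq S$ is $\Gamma$-semiprime if for every $a\in S$, $a\Gamma a\subseteq P$ implies $a\in P$. *)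

(* Defs.v *)
Definition is_GammaAG {S G : Type} (op : S -> G -> S -> S) : Prop :=
  forall (x y z : S) (g d : G), op (op x g y) d z = op (op z g y) d x.

Definition is_GammaAGss {S G : Type} (op : S -> G -> S -> S) : Prop :=
  is_GammaAG op /\
  forall (a b c : S) (al be : G), op a al (op b be c) = op b al (op a be c).

Definition intra_regular {S G : Type} (op : S -> G -> S -> S) : Prop :=
  forall a : S, exists (x y : S) (be ga de : G),
    a = op (op x be (op a de a)) ga y.

Definition right_Gamma_ideal {S G : Type} (op : S -> G -> S -> S) (R : S -> Prop) : Prop :=
  (exists r, R r) /\ forall (r : S) (g : G) (s : S), R r -> R (op r g s).

Definition Gamma_semiprime {S G : Type} (op : S -> G -> S -> S) (P : S -> Prop) : Prop :=
  forall a : S, (forall g : G, P (op a g a)) -> P a.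

(* Main.v *)
Require Import Defs.

Lemma paramedial {S G : Type} (op : S -> G -> S -> S) :
  is_GammaAGss op -> forall a b c d al be ga,
  op (op a al b) be (op c ga d) = op (op d al b) be (op c ga a).
Proof.
  intros [LI SS] a b c d al be ga.
  rewrite (SS (op a al b) c d be ga).
  rewrite (LI a b d al ga).
  rewrite (SS c (op d al b) a be ga).
  reflexivity.
Qed.

Theorem mainTheorem15 (S G : Type) (s0 : S) (g0 : G) (op : S -> G -> S -> S) :
  is_GammaAGss op ->
  (intra_regular op <->
   forall R : S -> Prop, right_Gamma_ideal op R -> Gamma_semiprime op R).
Proof.
  intros H. pose proof (paramedial op H) as PM. destruct H as [LI SS].
  split.
  - intros IR R [_ HR] a Hsq.
    destruct (IR a) as (x & y & b & g & d & Ha).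
    assert (E1 : op x b (op a d a) = op a b (op x d a)) by apply SS.
    assert (E2 : a = op (op y b (op x d a)) g a).
    { transitivity (op (op a b (op x d a)) g y).
      rewrite <- E1; exact Ha. apply LI. }
    assert (E3 : op a b (op x d a) = op (op (op y b (op x d a)) g a) b (op x d a)).
    { rewrite <- E2. reflexivity. }
    rewrite (PM (op y b (op x d a)) a x a g b d) in E3.
    rewrite Ha, E1, E3.
    apply HR. apply HR. apply Hsq.
  - intros HS a.
    set (R := fun z => (exists g, z = op a g a) \/ (exists g al s, z = op (op a g a) al s)
       \/ (exists w b g, z = op w b (op a g a))
       \/ (exists x b d g y, z = op (op x b (op a d a)) g y)).
    assert (HRa : R a).
    { apply HS.
      - split. exists (op a g0 a). left. exists g0. reflexivity.
        intros r e t [[g Hr]|[[g [al [s Hr]]]|[[w [b [g Hr]]]|[x [b [d [g [y Hr]]]]]]]]; subst r.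
        + right. left. exists g, e, t. reflexivity.
        + right. right. left. exists (op t al s), e, g. apply LI.
        + right. right. right. exists w, b, g, e, t. reflexivity.
        + right. right. left. exists (op (op x b t) g y), e, d.
          rewrite LI. rewrite PM. apply LI.
      - intros g. left. exists g. reflexivity. }
    destruct HRa as [[g Ha]|[[g [al [s Ha]]]|[[w [b [g Ha]]]|[x [b [d [g [y Ha]]]]]]]].
    + exists a, a, g, g, g. repeat rewrite <- Ha. reflexivity.
    + exists (op a al s), s, g, al, g.
      assert (E : op a g a = op (op (op a g a) al s) g a) by (rewrite <- Ha; reflexivity).
      rewrite LI in E. rewrite <- E. exact Ha.
    + exists w, (op w g a), b, b, g. rewrite <- Ha.
      transitivity (op w b (op a g a)); [exact Ha | apply SS].
    + exists x, y, b, g, d. exact Ha.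
Qed.
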